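(* Let $A$ be a uniform Kan complex, $\pi:B\to A^{\mathrm{I}}$ a uniform Kan fibration, and $b:A\to B$ a map with $\pi\circ b=r$, where $r:A\to A^{\mathrm{I}}$ is the constant-path map. Then there is a map $j:A^{\mathrm{I}}\to B$ with $\pi\circ j=1_{A^{\mathrm{I}}}$.
   Context: Let $\mathbb{B}$ be the category of finite sets $[n]=\{\bot,x_1,\dots,x_n,\top\}$ ($n\ge0$, $\bot\ne\top$) and functions preserving $\bot,\top$; cartesian cubical sets are presheaves on $\mathbb{B}^{op}$. $\mathrm{I}^n$ is the representable on $[n]$, $\mathrm{I}^n\cong\mathrm{I}\times\dots\times\mathrm{I}$, $\mathrm{I}=\mathrm{I}^1$, $\mathrm{I}^0=1$; the two maps $[1]\to[0]$ give endpoints $0,1:1\to\mathrm{I}$. $A^{\mathrm{I}}$ is the exponential and $r:A\to A^{\mathrm{I}}$ is induced by $\mathrm{I}\to1$. For $1\le i\le n$, $d\in\{0,1\}$, the face $\alpha_i^d:\mathrm{I}^{n-1}\to\mathrm{I}^n$ inserts $d$ in coordinate $i$; for $e\in\{0,1\}$ the open box $\sqcup^n_e\rightarrowtail\mathrm{I}^n$ is the union of the images of all faces $\alpha_i^d$ with $(i,d)\ne(1,e)$, with inclusion $i^n_e$. A uniform Kan fibration structure on $f:Y\to X$ consists of, for each $n\ge1$, $e\in\{0,1\}$, $k\ge1$ and each commutative square $b':\mathrm{I}^k\times\sqcup^n_e\to Y$, $a:\mathrm{I}^k\times\mathrm{I}^n\to X$ with $fb'=a(1\times i^n_e)$, a chosen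 filler $\phi(a,b'):\mathrm{I}^k\times\mathrm{I}^n\to Y$ with $\phi(a,b')(1\times i^n_e)=b'$ and $f\phi(a,b')=a$, such that $\phi(a,b')\circ(\alpha\times1)=\phi(a(\alpha\times1),b'(\alpha\times1))$ for all $\alpha:\mathrm{I}^j\to\mathrm{I}^k$ ($j\ge1$). A uniform Kan complex is a cubical set $A$ with a uniform Kan fibration structure on $A\to1$. *)

(* Defs.v *)
From Stdlib Require Import FunctionalExtensionality ProofIrrelevance.
From mathcomp Require Import all_boot.
Set Implicit Arguments. Unset Strict Implicit. Unset Printing Implicit Defensive.

(* The object [n] = {bot, x_1, ..., x_n, top} is represented by 'I_n.+2:
   bot = 0, x_i = i, top = n+1. *)
Definition Bprop n m (f : {ffun 'I_n.+2 -> 'I_m.+2}) : bool :=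
  (f ord0 == ord0) && (f ord_max == ord_max).
Definition Bmor (n m : nat) := {f : {ffun 'I_n.+2 -> 'I_m.+2} | Bprop f}.

Lemma idB_proof n : Bprop [ffun x : 'I_n.+2 => x].
Proof. by rewrite /Bprop !ffunE !eqxx. Qed.
Definition idB n : Bmor n n := @exist _ (@Bprop n n) _ (idB_proof n).

Lemma compB_proof n m p (g : Bmor m p) (f : Bmor n m) :
  Bprop [ffun x => sval g (sval f x)].
Proof.
case: g f => [g /andP[/eqP g0 /eqP g1]] [f /andP[/eqP f0 /eqP f1]] /=.
by rewrite /Bprop !ffunE f0 f1 g0 g1 !eqxx.
Qed.
Definition compB n m p (g : Bmor m p) (f : Bmor n m) : Bmor n p :=
  @exist _ (@Bprop n p) _ (compB_proof g f).


Lemma compB_id_l n m (f : Bmor n m) : compB (idB m) f = f.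
Proof. by apply: val_inj; apply/ffunP => x; rewrite /= !ffunE. Qed.
Lemma compB_id_r n m (f : Bmor n m) : compB f (idB n) = f.
Proof. by apply: val_inj; apply/ffunP => x; rewrite /= !ffunE. Qed.
Lemma compB_assoc n m p q (h : Bmor p q) (g : Bmor m p) (f : Bmor n m) :
  compB h (compB g f) = compB (compB h g) f.
Proof. by apply: val_inj; apply/ffunP => x; rewrite /= !ffunE. Qed.

(* The B-map [n+1] -> [n] corresponding to the face alpha_{j+1}^d : I^n -> I^{n+1}:
   it sends x_{j+1} to bot (d = false, i.e. 0) or top (d = true, i.e. 1),
   x_i to x_i for i < j+1 and x_i to x_{i-1} for i > j+1. *)
Definition faceF n (j : 'I_n.+1) (d : bool) : {ffun 'I_n.+3 -> 'I_n.+2} :=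
  [ffun k : 'I_n.+3 => if (k : nat) == j.+1 then (if d then ord_max else ord0)
                      else if (k : nat) < j.+1 then inord k else inord k.-1].

Lemma faceB_proof n (j : 'I_n.+1) (d : bool) : Bprop (faceF j d).
Proof.
have hj := ltn_ord j.
rewrite /Bprop /faceF !ffunE /=; apply/andP; split; apply/eqP/val_inj => /=.
  by rewrite inordK.
have -> : (n.+2 == j.+1) = false.
  by apply/negbTE; rewrite eqSS; apply/eqP => E; move: hj; rewrite -E ltnn.
have -> : (n.+2 < j.+1) = false.
  by apply/negbTE; rewrite -leqNgt; exact: leq_trans hj (leqnSn _).
by rewrite inordK.
Qed.
Definition faceB n (j : 'I_n.+1) (d : bool) : Bmor n.+1 n := @exist _ (@Bprop n.+1 n) _ (faceB_proof j d).

Record cset := CSet {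
  ob : nat -> Type;
  act : forall n m, Bmor n m -> ob n -> ob m;
  act_id : forall n (x : ob n), act (idB n) x = x;
  act_comp : forall n m p (g : Bmor m p) (f : Bmor n m) (x : ob n),
      act (compB g f) x = act g (act f x)
}.

Record cmap (X Y : cset) := CMap {
  cf :> forall n, ob X n -> ob Y n;
  cnat : forall n m (f : Bmor n m) (x : ob X n), cf (act f x) = act f (cf x)
}.

Lemma cmap_ext X Y (p q : cmap X Y) : (forall n x, p n x = q n x) -> p = q.
Proof.
case: p q => [p pn] [q qn] /= H.
have E : p = q by apply: functional_extensionality_dep => n;
  apply: functional_extensionality => x; apply: H.
subst q; f_equal; apply: proof_irrelevance.
Qed.

Definition eqm X Y (p q : cmap X Y) := forall n x, p n x = q n x.

Definition idm X : cmap X X := @CMap X X (fun n x => x) (fun n m f x => erefl).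

Lemma compm_nat X Y Z (g : cmap Y Z) (f : cmap X Y) n m (h : Bmor n m) (x : ob X n) :
  g m (f m (act h x)) = act h (g n (f n x)).
Proof. by rewrite cnat cnat. Qed.
Definition compm X Y Z (g : cmap Y Z) (f : cmap X Y) : cmap X Z :=
  CMap (compm_nat g f).

Definition Term : cset :=
  @CSet (fun _ => unit) (fun _ _ _ x => x) (fun _ _ => erefl) (fun _ _ _ _ _ _ => erefl).
Definition toTerm X : cmap X Term := @CMap X Term (fun _ _ => tt) (fun _ _ _ _ => erefl).

Definition Prod (X Y : cset) : cset :=
  @CSet (fun n => (ob X n * ob Y n)%type)
        (fun n m f x => (act f x.1, act f x.2))
        (fun n x => ltac:(by case: x => a b; rewrite /= !act_id))
        (fun n m p g f x => ltac:(by case: x => a b; rewrite /= !act_comp)).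

Lemma prodmap_nat X X' Y Y' (p : cmap X X') (q : cmap Y Y') n m (f : Bmor n m)
  (x : ob (Prod X Y) n) :
  (p m (act f x).1, q m (act f x).2) = act (c:=Prod X' Y') f (p n x.1, q n x.2).
Proof. by case: x => a b /=; rewrite !cnat. Qed.
Definition prodmap X X' Y Y' (p : cmap X X') (q : cmap Y Y') : cmap (Prod X Y) (Prod X' Y') :=
  @CMap (Prod X Y) (Prod X' Y') (fun n x => (p n x.1, q n x.2)) (prodmap_nat p q).

(* representable I^n = B([n], -) *)
Definition Rep (n : nat) : cset :=
  @CSet (fun m => Bmor n m) (fun m p g h => compB g h)
        (fun m h => compB_id_l h)
        (fun m p q g f h => esym (compB_assoc g f h)).

Definition Int : cset := Rep 1.

(* open box in I^{n+1}: union of the images of all faces alpha_{j+1}^d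
   with (j+1, d) <> (1, e).  The image of alpha_{j+1}^d at level m consists of
   those f : [n+1] -> [m] of the form h o faceB j d. *)
Definition boxb n (e : bool) m (f : Bmor n.+1 m) : bool :=
  [exists j : 'I_n.+1, exists d : bool,
     ((j != ord0) || (d != e)) && [exists h : Bmor n m, f == compB h (faceB j d)]].

Lemma boxb_act n e m p (g : Bmor m p) (f : Bmor n.+1 m) :
  boxb e f -> boxb e (compB g f).
Proof.
case/existsP=> j /existsP [d /andP [Hjd /existsP [h /eqP Hh]]].
apply/existsP; exists j; apply/existsP; exists d; rewrite Hjd /=.
by apply/existsP; exists (compB g h); rewrite Hh compB_assoc.
Qed.

Definition Box_act n e m p (g : Bmor m p) (f : {f : Bmor n.+1 m | boxb e f}) :
  {f : Bmor n.+1 p | boxb e f} := @exist _ (@boxb n e p) _ (boxb_act g (svalP f)).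

Lemma Box_act_id n e m (f : {f : Bmor n.+1 m | boxb e f}) : Box_act (idB m) f = f.
Proof. by apply: val_inj; rewrite /= compB_id_l. Qed.
Lemma Box_act_comp n e m p q (g : Bmor p q) (g' : Bmor m p) (f : {f : Bmor n.+1 m | boxb e f}) :
  Box_act (compB g g') f = Box_act g (Box_act g' f).
Proof. by apply: val_inj; rewrite /= compB_assoc. Qed.

Definition Box n (e : bool) : cset :=
  @CSet (fun m => {f : Bmor n.+1 m | boxb e f}) (@Box_act n e)
        (@Box_act_id n e) (@Box_act_comp n e).

Definition boxincl n e : cmap (Box n e) (Rep n.+1) :=
  @CMap (Box n e) (Rep n.+1) (fun m f => sval f) (fun _ _ _ _ => erefl).

(* (A^I)(m) = Hom(I^m x I, A); the action of g : [m] -> [m'] precomposes with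
   (g^* x 1) where g^* : I^{m'} -> I^m is h |-> h o g. *)
Definition precomp m m' (g : Bmor m m') : cmap (Rep m') (Rep m) :=
  @CMap (Rep m') (Rep m) (fun p h => compB h g)
        (fun p q f h => esym (compB_assoc f h g)).

Definition Exp_act (A : cset) m m' (g : Bmor m m') (phi : cmap (Prod (Rep m) Int) A) :
  cmap (Prod (Rep m') Int) A := compm phi (prodmap (precomp g) (idm Int)).

Lemma Exp_act_id A m (phi : cmap (Prod (Rep m) Int) A) : Exp_act (idB m) phi = phi.
Proof. by apply: cmap_ext => n [h t] /=; rewrite compB_id_r. Qed.
Lemma Exp_act_comp A m m' m'' (g : Bmor m' m'') (f : Bmor m m')
  (phi : cmap (Prod (Rep m) Int) A) :
  Exp_act (compB g f) phi = Exp_act g (Exp_act f phi).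
Proof. by apply: cmap_ext => n [h t] /=; rewrite compB_assoc. Qed.

Definition Exp (A : cset) : cset :=
  @CSet (fun m => cmap (Prod (Rep m) Int) A) (@Exp_act A)
        (@Exp_act_id A) (@Exp_act_comp A).

(* r : A -> A^I, induced by I -> 1: a in A(m) |-> ((h, t) |-> A(h)(a)) *)
Definition r_elt (A : cset) m (a : ob A m) : cmap (Prod (Rep m) Int) A :=
  @CMap (Prod (Rep m) Int) A (fun p x => act x.1 a)
        (fun p q f x => act_comp f x.1 a).

Lemma r_nat (A : cset) m m' (g : Bmor m m') (a : ob A m) :
  r_elt (act g a) = act (c:=Exp A) g (r_elt a).
Proof. by apply: cmap_ext => n [h t] /=; rewrite act_comp. Qed.

Definition r (A : cset) : cmap A (Exp A) := @CMap A (Exp A) (@r_elt A) (@r_nat A).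

Definition sq_comm (X Y : cset) (f : cmap Y X) n k e
  (a : cmap (Prod (Rep k.+1) (Rep n.+1)) X) (b' : cmap (Prod (Rep k.+1) (Box n e)) Y) :=
  eqm (compm f b') (compm a (prodmap (idm (Rep k.+1)) (boxincl n e))).

Lemma sq_comm_pre X Y (f : cmap Y X) n k e a b' j (al : cmap (Rep j.+1) (Rep k.+1)) :
  @sq_comm X Y f n k e a b' ->
  @sq_comm X Y f n j e (compm a (prodmap al (idm _))) (compm b' (prodmap al (idm _))).
Proof. by move=> H m [x y]; apply: H. Qed.

Record ukan_fib (X Y : cset) (f : cmap Y X) := UKan {
  fill : forall n k e (a : cmap (Prod (Rep k.+1) (Rep n.+1)) X)
           (b' : cmap (Prod (Rep k.+1) (Box n e)) Y),
           sq_comm f a b' -> cmap (Prod (Rep k.+1) (Rep n.+1)) Y;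
  fill_box : forall n k e a b' (H : @sq_comm X Y f n k e a b'),
      eqm (compm (fill H) (prodmap (idm (Rep k.+1)) (boxincl n e))) b';
  fill_lift : forall n k e a b' (H : @sq_comm X Y f n k e a b'),
      eqm (compm f (fill H)) a;
  fill_unif : forall n k e a b' (H : @sq_comm X Y f n k e a b')
      j (al : cmap (Rep j.+1) (Rep k.+1)),
      eqm (compm (fill H) (prodmap al (idm (Rep n.+1))))
          (fill (sq_comm_pre al H))
}.

Definition ukan_complex (A : cset) := ukan_fib (toTerm A).

(* Main.v *)
Require Import Defs.
From mathcomp Require Import all_boot.
From Stdlib Require Import FunctionalExtensionality ProofIrrelevance.
From mathcomp Require Import zify.
Set Implicit Arguments. Unset Strict Implicit. Unset Printing Implicit Defensive.

Lemma Bext n m (f g : Bmor n m) : (forall k, val (sval f k) = val (sval g k)) -> f = g.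
Proof. move=> H; apply: val_inj; apply/ffunP => k; apply: val_inj; exact: H. Qed.

Lemma Bbot n m (f : Bmor n m) : val (sval f ord0) = 0.
Proof. by case: f => f /andP [/eqP -> _]. Qed.
Lemma Btop n m (f : Bmor n m) : val (sval f ord_max) = m.+1.
Proof. by case: f => f /andP [_ /eqP ->]. Qed.
Lemma Blt n m (f : Bmor n m) k : nat_of_ord (sval f k) < m.+2.
Proof. exact: ltn_ord. Qed.

Lemma compBE n m p (g : Bmor m p) (f : Bmor n m) k : sval (compB g f) k = sval g (sval f k).
Proof. by rewrite /= ffunE. Qed.

Definition mkF n m (F : nat -> nat) : {ffun 'I_n.+2 -> 'I_m.+2} :=
  [ffun k : 'I_n.+2 => if (k:nat) == 0 then ord0 else if (k:nat) == n.+1 then ord_max else inord (F k)].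
Lemma mkB_proof n m F : Bprop (@mkF n m F).
Proof. by rewrite /Bprop /mkF !ffunE /= eqxx. Qed.
Definition mkB n m F : Bmor n m := @exist _ (@Bprop n m) _ (@mkB_proof n m F).

Lemma valmkB n m F k : val (sval (@mkB n m F) k) =
  if (k:nat) == 0 then 0 else if (k:nat) == n.+1 then m.+1 else if F k < m.+2 then F k else 0.
Proof.
rewrite /= /mkF ffunE; case: eqP => //= _; case: eqP => //= _.
case: ltnP => H; first by rewrite inordK.
by rewrite /inord /insubd insubF //; apply/negbTE; rewrite -leqNgt.
Qed.

Lemma Bval_inord n m (f : Bmor n m) (k : 'I_n.+2) : sval f (inord k) = sval f k.
Proof. by rewrite inord_val. Qed.

Definition Pm m : Bmor m m.+1 := mkB m m.+1 id.
Definition xm m : Bmor m.+1 m := mkB m.+1 m (fun k => if k == m.+1 then 0 else k).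
Definition topB m : Bmor 1 m := mkB 1 m (fun _ => m.+1).
Definition inc1 : Bmor 1 2 := mkB 1 2 id.
Definition c0 : Bmor 1 2 := mkB 1 2 (fun _ => 0).
Definition pairB q (t s : Bmor 1 q) : Bmor 2 q :=
  mkB 2 q (fun k => if k == 1 then val (sval t (inord 1)) else val (sval s (inord 1))).
Definition Gl m m' (g : Bmor m m') : Bmor m.+1 m'.+1 :=
  mkB m.+1 m'.+1 (fun k => if k == m.+1 then m'.+1 else
     let v := val (sval g (inord k)) in if v == m'.+1 then m'.+2 else v).

Ltac crush := repeat (case: ifP => /=); move=> *; try lia.

Lemma ordcase n (k : 'I_n.+2) : [\/ k = ord0, k = ord_max | 0 < k < n.+1].
Proof.
case: (posnP k) => [H|H]; first by constructor 1; apply: val_inj.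
case: (ltnP k n.+1) => [H'|H']; first by constructor 3; apply/andP.
by constructor 2; apply: val_inj => /=; have := ltn_ord k; lia.
Qed.

Lemma GP m m' (g : Bmor m m') : compB (Gl g) (Pm m) = compB (Pm m') g.
Proof.
apply: Bext => k; rewrite !compBE /Gl /Pm.
case: (ordcase k) => [->|->|/andP[H1 H2]].
- by rewrite !valmkB /= Bbot /=.
- by rewrite !valmkB /= !eqxx /= Btop ?eqxx /=.
- rewrite !valmkB /=.
  have hg := Blt g k.
  rewrite (_ : (k:nat) == 0 = false); last by apply/negbTE; lia.
  rewrite (_ : (k:nat) == m.+1 = false); last by apply/negbTE; lia.
  rewrite (_ : (k:nat) < m.+3 = true); last by lia.

  rewrite (_ : (k:nat) == 0 = false); last by apply/negbTE; lia.
  rewrite (_ : (k:nat) == m.+2 = false); last by apply/negbTE; lia.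
  rewrite (_ : (k:nat) == m.+1 = false); last by apply/negbTE; lia.
  rewrite inord_val.
  crush.
Qed.

Lemma mkB0 n m F : sval (@mkB n m F) ord0 = ord0.
Proof. by apply: val_inj; rewrite valmkB. Qed.
Lemma mkBmax n m F : sval (@mkB n m F) ord_max = ord_max.
Proof. by apply: val_inj; rewrite valmkB /= eqxx. Qed.
Lemma Bf0 n m (f : Bmor n m) : sval f ord0 = ord0.
Proof. by apply: val_inj; rewrite Bbot. Qed.
Lemma Bfmax n m (f : Bmor n m) : sval f ord_max = ord_max.
Proof. by apply: val_inj; rewrite Btop. Qed.

Lemma xmG m m' (g : Bmor m m') : compB g (xm m) = compB (xm m') (Gl g).
Proof.
apply: Bext => k; rewrite !compBE /Gl /xm.
case: (ordcase k) => [->|->|/andP[H1 H2]].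
- by rewrite !mkB0 Bf0.
- by rewrite !mkBmax Bfmax.
- have hk := ltn_ord k.
  case: ((k:nat) =P m.+1) => [Hk|Hk].
    have -> : sval (mkB m.+1 m (fun k0 : nat => if k0 == m.+1 then 0 else k0)) k = ord0.
      by apply: val_inj; rewrite valmkB Hk; crush.
    rewrite Bf0 !valmkB Hk !eqxx /=. crush.
  have -> : sval (mkB m.+1 m (fun k0 : nat => if k0 == m.+1 then 0 else k0)) k = inord k.
    apply: val_inj; rewrite valmkB /= inordK; last by lia.
    crush.
  rewrite !valmkB /=.
  rewrite (_ : (k:nat) == 0 = false); last by apply/negbTE; lia.
  rewrite (_ : (k:nat) == m.+2 = false); last by apply/negbTE; lia.
  have hg := Blt g (inord k).
  crush.
Qed.

Lemma idBE n (k : 'I_n.+2) : sval (idB n) k = k.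
Proof. by rewrite /= ffunE. Qed.

Lemma xmP m : compB (xm m) (Pm m) = idB m.
Proof.
apply: Bext => k; rewrite !compBE /Pm /xm idBE.
case: (ordcase k) => [->|->|/andP[H1 H2]].
- by rewrite !mkB0.
- by rewrite !mkBmax.
- have -> : sval (mkB m m.+1 id) k = inord k.
    apply: val_inj; rewrite valmkB /= inordK; last by lia.
    crush.
  rewrite valmkB inordK; last by lia.
  crush.
Qed.

Definition botB q : Bmor 1 q := mkB 1 q (fun _ => 0).

Lemma eqB1 q (u v : Bmor 1 q) : val (sval u (inord 1)) = val (sval v (inord 1)) -> u = v.
Proof.
move=> H; apply: Bext => k.
case: (ordcase k) => [->|->|/andP[H1 H2]].
- by rewrite !Bbot.
- by rewrite !Btop.
- have -> : k = inord 1 by apply: val_inj; rewrite /= inordK; lia.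
  exact: H.
Qed.

Lemma valmkB1 n m F : val (sval (@mkB n m F) (inord 1)) = if n == 0 then m.+1 else if F 1 < m.+2 then F 1 else 0.
Proof. rewrite valmkB inordK //; case: n => //. Qed.

Lemma valmkB2 m F : val (sval (@mkB 2 m F) (inord 2)) = if F 2 < m.+2 then F 2 else 0.
Proof. by rewrite valmkB inordK. Qed.

Lemma mkB_in n m F (k : 'I_n.+2) : 0 < k < n.+1 -> sval (@mkB n m F) k = inord (F k).
Proof.
move=> /andP [H1 H2]; apply: val_inj; rewrite valmkB.
rewrite (_ : (k:nat) == 0 = false); last by apply/negbTE; lia.
rewrite (_ : (k:nat) == n.+1 = false); last by apply/negbTE; lia.
case: ltnP => H; first by rewrite /= inordK.
by rewrite /inord /insubd insubF //; apply/negbTE; rewrite -leqNgt.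
Qed.

Lemma mkB_1 n m F : sval (@mkB n.+1 m F) (inord 1) = inord (F 1).
Proof. by rewrite mkB_in inordK. Qed.

Lemma topB_nat m m' (g : Bmor m m') : compB g (topB m) = topB m'.
Proof.
apply: eqB1; rewrite compBE /topB !mkB_1.
have -> : (inord m.+1 : 'I_m.+2) = ord_max by apply: val_inj; rewrite /= inordK.
by rewrite Bfmax /= inordK.
Qed.

Lemma pairB_nat q q' (g : Bmor q q') (t s : Bmor 1 q) :
  compB g (pairB t s) = pairB (compB g t) (compB g s).
Proof.
apply: Bext => k; rewrite !compBE /pairB.
case: (ordcase k) => [->|->|Hk].
- by rewrite !mkB0 Bf0.
- by rewrite !mkBmax Bfmax.
- rewrite !mkB_in // !compBE.
  case: ifP => _; by rewrite !inord_val.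
Qed.

Lemma pair_inc1 q (t s : Bmor 1 q) : compB (pairB t s) inc1 = t.
Proof.
apply: eqB1; rewrite compBE /inc1 mkB_1 /pairB.
by rewrite mkB_in inordK //= inord_val.
Qed.

Lemma pair2 q (t s : Bmor 1 q) : sval (pairB t s) (inord 2) = sval s (inord 1).
Proof. by rewrite /pairB mkB_in inordK //= inord_val. Qed.

Lemma c0_bot q (z : Bmor 2 q) : compB z c0 = botB q.
Proof.
apply: eqB1; rewrite compBE /c0 /botB !mkB_1.
rewrite (_ : (inord 0 : 'I_4) = ord0); last by apply: val_inj; rewrite /= inordK.
by rewrite Bf0 /= inordK.
Qed.

Lemma botB_nat q q' (g : Bmor q q') : compB g (botB q) = botB q'.
Proof.
apply: eqB1; rewrite compBE /botB !mkB_1.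
rewrite (_ : (inord 0 : 'I_q.+2) = ord0); last by apply: val_inj; rewrite /= inordK.
by rewrite Bf0 /= inordK.
Qed.

Lemma faceE n (j : 'I_n.+1) d k : sval (faceB j d) k = faceF j d k.
Proof. by []. Qed.

Lemma faceE1 d : sval (faceB (ord_max : 'I_2) d) (inord 1) = inord 1.
Proof. apply: val_inj; rewrite faceE /faceF ffunE !inordK //. Qed.
Lemma faceE2 d : sval (faceB (ord_max : 'I_2) d) (inord 2) = if d then ord_max else ord0.
Proof. rewrite faceE /faceF ffunE !inordK //. Qed.

Lemma ord4 (k : 'I_4) : [\/ k = ord0, k = ord_max, k = inord 1 | k = inord 2].
Proof.
case: k => [[|[|[|[|k]]]] Hk] //.
- by constructor 1; apply: val_inj.
- by constructor 3; apply: val_inj; rewrite /= inordK.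
- by constructor 4; apply: val_inj; rewrite /= inordK.
- by constructor 2; apply: val_inj.
Qed.

Lemma box1_mem q (z : Bmor 2 q) (d : bool) :
  sval z (inord 2) = (if d then ord_max else ord0) -> boxb true z.
Proof.
move=> Hz; apply/existsP; exists ord_max; apply/existsP; exists d.
apply/andP; split; first by [].
apply/existsP; exists (compB z inc1); apply/eqP.
apply: Bext => k; rewrite !compBE.
case: (ord4 k) => ->.
- by rewrite !Bf0.
- by rewrite !Bfmax.
- by rewrite faceE1 /inc1 mkB_1.
- rewrite faceE2 Hz; case: d {Hz} => /=.
  + by rewrite /inc1 mkBmax Bfmax.
  + by rewrite /inc1 mkB0 Bf0.
Qed.

Lemma box1_cases p (f : Bmor 2 p) : boxb true f ->
  [\/ sval f (inord 1) = ord0, sval f (inord 2) = ord0 | sval f (inord 2) = ord_max].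
Proof.
case/existsP=> j /existsP [d /andP [Hjd /existsP [h /eqP Hh]]].
rewrite {}Hh !compBE !faceE /faceF !ffunE.
case: j Hjd => [[|[|j]] Hj] //= Hjd.
- have Hd : d = false by case: d Hjd.
  subst d; constructor 1; rewrite inordK //=.
  by rewrite Bf0.
- rewrite (@inordK 3 1) // (@inordK 3 2) //=.
  by case: d {Hjd}; [constructor 3; rewrite Bfmax | constructor 2; rewrite Bf0].
Qed.

Lemma box0_bot p (f : Bmor 1 p) : boxb true f -> f = botB p.
Proof.
case/existsP=> j /existsP [d /andP [Hjd /existsP [h /eqP Hh]]].
apply: eqB1; rewrite {}Hh compBE faceE /faceF ffunE /botB mkB_1.
case: j Hjd => [[|j] Hj] //= Hjd.
have Hd : d = false by case: d Hjd.
subst d; rewrite inordK //=.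
by rewrite Bf0 /= inordK.
Qed.

Definition sel p (f : Bmor 2 p) : Bmor 1 p :=
  if sval f (inord 2) == ord_max then compB f inc1 else compB f c0.

Lemma sel_nat p p' (g : Bmor p p') (f : Bmor 2 p) : boxb true f ->
  compB g (sel f) = sel (compB g f).
Proof.
move=> Hf; rewrite /sel compBE.
case: eqP => [->|Hn]; first by rewrite Bfmax eqxx compB_assoc.
case: eqP => [Hm|Hm]; last by rewrite !c0_bot botB_nat.
case: (box1_cases Hf) => [H1|H2|H2].
- rewrite c0_bot botB_nat; apply: eqB1.
  rewrite !compBE /inc1 mkB_1 H1 Bf0 /botB mkB_1 /= inordK //.
- by move: Hm; rewrite H2 Bf0 => /(congr1 val) /=.
- by [].
Qed.

Lemma fill_ext X Y (f : cmap Y X) (K : ukan_fib f) n k e a1 a2 b1 b2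
  (H1 : @sq_comm X Y f n k e a1 b1) (H2 : @sq_comm X Y f n k e a2 b2) :
  a1 = a2 -> b1 = b2 -> fill K H1 = fill K H2.
Proof. move=> E1 E2; subst; by rewrite (proof_irrelevance _ H1 H2). Qed.

Definition bA_fun (A : cset) m (w : cmap (Prod (Rep m) Int) A) p
  (x : ob (Prod (Rep m.+1) (Box 1 true)) p) : ob A p :=
  w p (compB x.1 (Pm m), sel (sval x.2)).

Lemma bA_nat (A : cset) m (w : cmap (Prod (Rep m) Int) A) p p' (g : Bmor p p')
  (x : ob (Prod (Rep m.+1) (Box 1 true)) p) :
  bA_fun w (act g x) = act g (bA_fun w x).
Proof.
rewrite /bA_fun -cnat; congr (w _ (_, _)).
- by rewrite /= compB_assoc.
- by rewrite /= sel_nat //; case: x.2.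
Qed.

Definition bA (A : cset) m (w : cmap (Prod (Rep m) Int) A) :
  cmap (Prod (Rep m.+1) (Box 1 true)) A := CMap (@bA_nat A m w).

Lemma HA (A : cset) m (w : cmap (Prod (Rep m) Int) A) :
  sq_comm (toTerm A) (toTerm (Prod (Rep m.+1) (Rep 2))) (bA w).
Proof. by []. Qed.

Definition FA (A : cset) (KA : ukan_complex A) m (w : cmap (Prod (Rep m) Int) A) :=
  fill KA (HA w).

Definition hfun (A : cset) m (F : cmap (Prod (Rep m.+1) (Rep 2)) A) p
  (x : Bmor m.+1 p) (u : Bmor 1 p) q (y : ob (Prod (Rep p) Int) q) : ob A q :=
  F q (compB y.1 x, pairB y.2 (compB y.1 u)).

Lemma hfun_nat (A : cset) m (F : cmap (Prod (Rep m.+1) (Rep 2)) A) p x u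
  q q' (g : Bmor q q') y :
  @hfun A m F p x u q' (act g y) = act g (hfun F x u y).
Proof.
rewrite /hfun -cnat; congr (F _ (_, _)).
- by rewrite /= compB_assoc.
- by rewrite /= pairB_nat compB_assoc.
Qed.

Definition hmap (A : cset) m (F : cmap (Prod (Rep m.+1) (Rep 2)) A) p
  (x : Bmor m.+1 p) (u : Bmor 1 p) : cmap (Prod (Rep p) Int) A :=
  CMap (@hfun_nat A m F p x u).

Lemma aB_nat (A : cset) m (F : cmap (Prod (Rep m.+1) (Rep 2)) A) p p' (g : Bmor p p')
  (x : ob (Prod (Rep m.+1) (Rep 1)) p) :
  hmap F (act g x).1 (act g x).2 = act (c := Exp A) g (hmap F x.1 x.2).
Proof.
apply: cmap_ext => q [h t] /=.
by rewrite /hfun /= !compB_assoc.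
Qed.

Definition aB (A : cset) m (F : cmap (Prod (Rep m.+1) (Rep 2)) A) :
  cmap (Prod (Rep m.+1) (Rep 1)) (Exp A) :=
  @CMap (Prod (Rep m.+1) (Rep 1)) (Exp A) (fun p (x : ob (Prod (Rep m.+1) (Rep 1)) p) => hmap F x.1 x.2) (@aB_nat A m F).

Definition bB_fun (A B : cset) (b : cmap A B) m (w : cmap (Prod (Rep m) Int) A) p
  (x : ob (Prod (Rep m.+1) (Box 0 true)) p) : ob B p :=
  b p (w p (compB x.1 (Pm m), sval x.2)).

Lemma bB_nat (A B : cset) (b : cmap A B) m (w : cmap (Prod (Rep m) Int) A) p p' (g : Bmor p p')
  (x : ob (Prod (Rep m.+1) (Box 0 true)) p) :
  bB_fun b w (act g x) = act g (bB_fun b w x).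
Proof.
rewrite /bB_fun -cnat -cnat; congr (b _ (w _ (_, _))).
by rewrite /= compB_assoc.
Qed.

Definition bB (A B : cset) (b : cmap A B) m (w : cmap (Prod (Rep m) Int) A) :
  cmap (Prod (Rep m.+1) (Box 0 true)) B := CMap (@bB_nat A B b m w).

Lemma ord_max_neq0 q : (ord_max : 'I_q.+2) == ord0 = false.
Proof. by []. Qed.

Lemma HB (A B : cset) (KA : ukan_complex A) (pi : cmap B (Exp A)) (b : cmap A B)
  (hb : eqm (compm pi b) (r A)) m (w : cmap (Prod (Rep m) Int) A) :
  sq_comm pi (aB (FA KA w)) (bB b w).
Proof.
move=> p [x [f Hf]] /=.
rewrite /bB_fun /=.
have := hb p (w p (compB x (Pm m), f)); rewrite /= => ->.
apply: cmap_ext => q [h t] /=.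
rewrite /hfun /=.
have Ef := box0_bot Hf. subst f.
rewrite botB_nat.
have Hz : boxb true (pairB t (botB q)).
  apply: (@box1_mem _ _ false); rewrite pair2 /botB mkB_1.
  by apply: val_inj; rewrite /= inordK.
have := fill_box KA (HA w) ((compB h x, @exist _ (@boxb 1 true q) _ Hz) : ob (Prod (Rep m.+1) (Box 1 true)) q).
rewrite /= => ->.
rewrite /bA_fun /= /sel pair2.
have -> : (sval (botB q) (inord 1) == ord_max) = false.
  rewrite /botB mkB_1; apply/negbTE/eqP => /(congr1 val) /=; rewrite inordK //.
rewrite c0_bot -cnat /= compB_assoc botB_nat //.
Qed.

Definition FB (A B : cset) (KA : ukan_complex A) (pi : cmap B (Exp A)) (Kpi : ukan_fib pi)
  (b : cmap A B) (hb : eqm (compm pi b) (r A)) m (w : cmap (Prod (Rep m) Int) A) :=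
  fill Kpi (HB KA hb w).

Definition jfun (A B : cset) (KA : ukan_complex A) (pi : cmap B (Exp A)) (Kpi : ukan_fib pi)
  (b : cmap A B) (hb : eqm (compm pi b) (r A)) m (w : ob (Exp A) m) : ob B m :=
  FB KA Kpi hb w m (xm m, topB m).

Lemma jfun_sec (A B : cset) (KA : ukan_complex A) (pi : cmap B (Exp A)) (Kpi : ukan_fib pi)
  (b : cmap A B) (hb : eqm (compm pi b) (r A)) m (w : ob (Exp A) m) :
  pi m (jfun KA Kpi hb w) = w.
Proof.
rewrite /jfun /FB.
have := fill_lift Kpi (HB KA hb w) (xm m, topB m); rewrite /= => ->.
apply: cmap_ext => q [h t] /=.
rewrite /hfun /= topB_nat.
have Hz : boxb true (pairB t (topB q)).
  apply: (@box1_mem _ _ true); rewrite pair2 /topB mkB_1.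
  by apply: val_inj; rewrite /= inordK.
have := fill_box KA (HA w) ((compB h (xm m), @exist _ (@boxb 1 true q) _ Hz) : ob (Prod (Rep m.+1) (Box 1 true)) q).
rewrite /= => ->.
rewrite /bA_fun /= /sel pair2.
have -> : (sval (topB q) (inord 1) == ord_max).
  rewrite /topB mkB_1; apply/eqP; apply: val_inj; rewrite /= inordK //.
by rewrite pair_inc1 -compB_assoc xmP compB_id_r.
Qed.

Lemma FA_nat (A : cset) (KA : ukan_complex A) m m' (g : Bmor m m') (w : cmap (Prod (Rep m) Int) A)
  q y z :
  FA KA w q (compB y (Gl g), z) = FA KA (act (c := Exp A) g w) q (y, z).
Proof.
have := fill_unif KA (HA w) (precomp (Gl g)) (y, z); rewrite /= => ->.
rewrite /FA; congr (@cf (Prod (Rep m'.+1) (Rep 2)) A _ q (y, z)).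
apply: fill_ext.
- by apply: cmap_ext => p x.
- apply: cmap_ext => p [y' f] /=.
  by rewrite /bA_fun /= -!compB_assoc GP.
Qed.

Lemma jfun_nat (A B : cset) (KA : ukan_complex A) (pi : cmap B (Exp A)) (Kpi : ukan_fib pi)
  (b : cmap A B) (hb : eqm (compm pi b) (r A)) m m' (g : Bmor m m') (w : ob (Exp A) m) :
  jfun KA Kpi hb (act g w) = act g (jfun KA Kpi hb w).
Proof.
rewrite /jfun -cnat /= xmG topB_nat.
have := fill_unif Kpi (HB KA hb w) (precomp (Gl g)) (xm m', topB m'); rewrite /= => ->.
rewrite /FB; congr (@cf (Prod (Rep m'.+1) (Rep 1)) B _ m' (xm m', topB m')); symmetry.
apply: fill_ext.
- apply: cmap_ext => p [y u] /=.
  apply: cmap_ext => q [h t] /=.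
  by rewrite /hfun /= compB_assoc; exact: FA_nat.
- apply: cmap_ext => p [y f] /=.
  by rewrite /bB_fun /= -!compB_assoc GP.
Qed.

Theorem proposition3p6 (A B : cset) (KA : ukan_complex A)
  (pi : cmap B (Exp A)) (Kpi : ukan_fib pi)
  (b : cmap A B) (hb : eqm (compm pi b) (r A)) :
  exists j : cmap (Exp A) B, eqm (compm pi j) (idm (Exp A)).
Proof.
exists (@CMap (Exp A) B (fun m w => jfun KA Kpi hb w)
          (fun n m f x => jfun_nat KA Kpi hb f x)).
move=> m w /=; exact: jfun_sec.
Qed.
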